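(* Let $f,g\in C[0,1]$ and let $\mathcal{R}$ be the ring of functions of the form $P(f,g)$, $x\mapsto p(f(x),g(x))$, where $p$ ranges over polynomials in two variables with real coefficients. Then for every $P(f,g)\in\mathcal{R}$, $$\overline{\dim}_B G(P(f,g))\le \max\{\overline{\dim}_B G(f),\ \overline{\dim}_B G(g)\}.$$
   Context: $C[0,1]$ is the space of real-valued continuous functions on $[0,1]$; $G(h)=\{(x,h(x)):x\in[0,1]\}\subset\mathbb{R}^2$ is the graph of $h$. For a nonempty bounded set $F$, $N_\delta(F)$ is the smallest number of sets of diameter at most $\delta$ covering $F$, and $\overline{\dim}_B F=\limsup_{\delta\to0}\frac{\log N_\delta(F)}{-\log\delta}$. *)

(* Defs.v *)
From HB Require Import structures.
From mathcomp Require Import all_boot all_order all_algebra.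
From mathcomp Require Import all_classical all_reals all_analysis.
Set Implicit Arguments. Unset Strict Implicit. Unset Printing Implicit Defensive.
Import Order.TTheory GRing.Theory Num.Theory numFieldNormedType.Exports.
Local Open Scope classical_set_scope.
Local Open Scope ring_scope.

Section Defs.
Variable R : realType.

Definition dist2 (p q : R * R) : R :=
  Num.sqrt ((p.1 - q.1) ^+ 2 + (p.2 - q.2) ^+ 2).

Definition graph (h : R -> R) : set (R * R) :=
  [set pq | exists x, (0 <= x <= 1) /\ pq = (x, h x)].

Definition covers (F : set (R * R)) (delta : R) (n : nat) : Prop :=
  exists U : 'I_n -> set (R * R),
    (forall i p q, U i p -> U i q -> dist2 p q <= delta) /\
    F `<=` \bigcup_i U i.

(* N_delta(F): the smallest number of such sets (as a real; meaningful for
   nonempty bounded F, where the defining set is nonempty) *)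
Definition Ndelta (F : set (R * R)) (delta : R) : R :=
  inf [set (n%:R : R) | n in [set n | covers F delta n]].

(* upper box dimension: limsup_{delta -> 0+} log N_delta(F) / (- log delta),
   written literally as inf_{eps>0} sup_{0<delta<eps} *)
Definition ubox_dim (F : set (R * R)) : \bar R :=
  ereal_inf [set ereal_sup [set ((ln (Ndelta F delta) / (- ln delta))%:E)
                             | delta in [set d : R | 0 < d < eps]]
            | eps in [set e : R | 0 < e]].

Definition poly2 (n : nat) (a : 'I_n -> 'I_n -> R) (x y : R) : R :=
  \sum_(i < n) \sum_(j < n) a i j * x ^+ i * y ^+ j.

End Defs.

(* Main.v *)
Require Import Defs.
From HB Require Import structures.
From mathcomp Require Import all_boot all_order all_algebra.
From mathcomp Require Import all_classical all_reals all_analysis.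
From mathcomp Require Import ring lra zify.
Import Order.TTheory GRing.Theory Num.Theory numFieldNormedType.Exports.
Local Open Scope classical_set_scope.
Local Open Scope ring_scope.

Set Implicit Arguments. Unset Strict Implicit.
Section Aux.
Variable R : realType.

Lemma dist2_grid (p q : R * R) (w d : R) : 0 <= d ->
  `|p.1 - q.1| <= w -> `|p.2 - q.2| <= w -> 2 * w ^+ 2 <= d ^+ 2 ->
  dist2 p q <= d.
Proof.
move=> d0 h1 h2 hw; rewrite /dist2 -(ger0_norm d0) -sqrtr_sqr ler_sqrt;
  last by rewrite sqr_ge0.
move: h1 h2; rewrite !ler_norml => /andP[a1 a2] /andP[b1 b2].
nra.
Qed.

Lemma dist2_ge1 (p q : R * R) : `|p.1 - q.1| <= dist2 p q.
Proof.
rewrite /dist2 -sqrtr_sqr ler_sqrt; last by rewrite addr_ge0 // sqr_ge0.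
by rewrite lerDl sqr_ge0.
Qed.

Lemma dist2_ge2 (p q : R * R) : `|p.2 - q.2| <= dist2 p q.
Proof.
rewrite /dist2 -sqrtr_sqr ler_sqrt; last by rewrite addr_ge0 // sqr_ge0.
by rewrite lerDr sqr_ge0.
Qed.

Lemma covers_fin (F : set (R * R)) (d : R) (T : finType) (U : T -> set (R * R)) :
  (forall t p q, U t p -> U t q -> dist2 p q <= d) ->
  (forall p, F p -> exists t, U t p) -> covers F d #|T|.
Proof.
move=> hd hc; exists (fun i => U (enum_val i)); split.
  by move=> i p q; apply: hd.
move=> p /hc [t Ut]; exists (enum_rank t) => //; by rewrite enum_rankK.
Qed.

Lemma covers_ge1 (F : set (R * R)) d n p : F p -> covers F d n -> (1 <= n)%N.
Proof.
move=> Fp [U [_ hc]]; case: n U hc => // U hc.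
by have [i _ _] := hc p Fp; case: i.
Qed.

Lemma Nd_le (F : set (R * R)) d n : covers F d n -> Ndelta F d <= n%:R.
Proof.
move=> c; rewrite /Ndelta; apply: ge_inf; last by exists n.
by exists 0 => _ [k _ <-]; rewrite ler0n.
Qed.

Lemma Nd_lb (F : set (R * R)) d x : (exists n, covers F d n) ->
  (forall n, covers F d n -> x <= n%:R) -> x <= Ndelta F d.
Proof.
move=> [n c] h; apply: lb_le_inf; first by exists n%:R, n.
by move=> _ [k ck <-]; apply: h.
Qed.

Lemma Nd_ge1 (F : set (R * R)) d p : F p -> (exists n, covers F d n) ->
  1 <= Ndelta F d.
Proof.
move=> Fp e; apply: Nd_lb => // n c.
by rewrite ler1n (covers_ge1 Fp c).
Qed.


Lemma natS_mul (w : R) (k : nat) : k.+1%:R * w = k%:R * w + w.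
Proof. by rewrite -natr1 mulrDl mul1r. Qed.

Lemma trunc_div (x w : R) : 0 < w -> 0 <= x ->
  (Num.truncn (x / w))%:R * w <= x < (Num.truncn (x / w)).+1%:R * w.
Proof.
move=> w0 x0; have /andP[a b] := truncn_itv (divr_ge0 x0 (ltW w0)).
by rewrite -ler_pdivlMr // -ltr_pdivrMr // a b.
Qed.

Lemma trunc_div_lt (x w : R) (n : nat) : 0 < w -> 0 <= x -> x < n%:R * w ->
  (Num.truncn (x / w) < n)%N.
Proof.
move=> w0 x0 h; rewrite truncn_lt_nat ?(divr_ge0 x0 (ltW w0)) //.
by rewrite ltr_pdivrMr.
Qed.

Lemma grid_cover (h : R -> R) (d w : R) (m : nat) (Rj : 'I_m -> nat)
  (base : 'I_m -> R) :
  0 < w -> 2 * w ^+ 2 <= d ^+ 2 -> 0 <= d -> 1 < m%:R * w ->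
  (forall (j : 'I_m) x, 0 <= x <= 1 -> j%:R * w <= x <= j.+1%:R * w ->
     base j <= h x < base j + (Rj j)%:R * w) ->
  covers (graph h) d (\sum_(j < m) Rj j)%N.
Proof.
move=> w0 hw d0 hm hb.
pose T := {j : 'I_m & 'I_(Rj j)}.
pose U (t : T) : set (R * R) :=
  [set p | (tag t)%:R * w <= p.1 <= (tag t).+1%:R * w /\
   base (tag t) + (tagged t)%:R * w <= p.2 <= base (tag t) + (tagged t).+1%:R * w].
have -> : (\sum_(j < m) Rj j)%N = #|{: T}|.
  rewrite card_tagged sumnE big_map big_enum /=.
  by apply: eq_bigr => i _; rewrite card_ord.
apply: (@covers_fin _ _ _ U).
  move=> t p q [/andP[a1 a2] /andP[b1 b2]] [/andP[c1 c2] /andP[e1 e2]].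
  apply: (dist2_grid (w := w)) => //; rewrite ler_norml;
  move: a2 b2 c2 e2; rewrite !natS_mul ?mulrDl ?mul1r => *; apply/andP; split; lra.
move=> p [x [/andP[x0 x1] ->]].
have hj : (Num.truncn (x / w) < m)%N.
  by apply: trunc_div_lt => //; lra.
pose j := Ordinal hj.
have /andP[j1 j2] := trunc_div w0 x0.
have /andP[c1 c2] := hb j x (introT andP (conj x0 x1)) (introT andP (conj j1 (ltW j2))).
have hx0 : 0 <= h x - base j by lra.
have hr : (Num.truncn ((h x - base j) / w) < Rj j)%N.
  by apply: trunc_div_lt => //; lra.
exists (Tagged (fun j => 'I_(Rj j)) (Ordinal hr)); rewrite /U /=.
have /andP[r1 r2] := trunc_div w0 hx0.
split; apply/andP; split => //; [exact: ltW | lra | ].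
move: r2; rewrite natS_mul => r2; lra.
Qed.


Definition inC (w : R) (j : nat) (x : R) :=
  0 <= x <= 1 /\ j%:R * w <= x <= j.+1%:R * w.

Definition colA (f : R -> R) (n : nat) (U : 'I_n -> set (R * R)) (w : R)
  (j : nat) : {set 'I_n} :=
  [set i | `[< exists x, inC w j x /\ U i (x, f x) >]].

Lemma colA_ge1 f n (U : 'I_n -> set (R * R)) w j x :
  graph f `<=` \bigcup_i U i -> inC w j x -> (1 <= #|colA f U w j|)%N.
Proof.
move=> hc hx; have [i _ Ui] : (\bigcup_i U i) (x, f x).
  by apply: hc; exists x; split => //; case: hx => /andP[-> ->].
by apply/card_gt0P; exists i; rewrite inE; apply/asboolP; exists x.
Qed.

Lemma conv_between (a b t : R) : 0 <= t <= 1 ->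
  Num.min a b <= a + t * (b - a) <= Num.max a b.
Proof.
move=> /andP[t0 t1]; rewrite /Num.min /Num.max.
case: ltP => hab; apply/andP; split; nra.
Qed.


Lemma col_osc (f : R -> R) n (U : 'I_n -> set (R * R)) (w d : R) (j : nat) x y :
  {within `[(0:R), 1]%classic, continuous f} ->
  (forall i p q, U i p -> U i q -> dist2 p q <= d) ->
  graph f `<=` \bigcup_i U i ->
  inC w j x -> inC w j y -> `|f x - f y| <= (#|colA f U w j|)%:R * d.
Proof.
move=> hf hd hc.
wlog xy : x y / x <= y.
  move=> H hx hy; case: (lerP x y) => h; first exact: H.
  by rewrite distrC; apply: H => //; exact: ltW.
move=> hx hy.
set a := #|colA f U w j|.
have a1 : (1 <= a)%N := colA_ge1 hc hx.
have a0 : (0 : R) < a%:R by rewrite ltr0n.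
rewrite leNgt; apply/negP => hlt.
pose D := f y - f x.
pose v (r : 'I_a.+1) := f x + (r%:R / a%:R) * D.
case: hx => /andP[x0 x1] /andP[jx1 jx2].
case: hy => /andP[y0 y1] /andP[jy1 jy2].
have hfxy : {within `[x, y], continuous f}.
  apply: continuous_subspaceW hf => z /=; rewrite !in_itv /= => /andP[z1 z2].
  apply/andP; split; lra.
have ex : forall r : 'I_a.+1, exists i : 'I_n,
    exists c, x <= c <= y /\ f c = v r /\ U i (c, f c).
  move=> r.
  have hv : Num.min (f x) (f y) <= v r <= Num.max (f x) (f y).
    apply: conv_between; apply/andP; split.
      by rewrite divr_ge0 // ler0n.
    by rewrite ler_pdivrMr // mul1r ler_nat -ltnS ltn_ord.
  have [c cin fc] := IVT xy hfxy hv.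
  move: cin; rewrite in_itv /= => /andP[c1 c2].
  have [i _ Ui] : (\bigcup_i U i) (c, f c).
    by apply: hc; exists c; split => //; apply/andP; split; lra.
  by exists i, c; split => //; apply/andP.
have [sg hsig] := choice ex.
have inj : injective sg.
  move=> r s e; apply/eqP; apply/negPn/negP => rs.
  have [c1 [_ [fc1 U1]]] := hsig r.
  have [c2 [_ [fc2 U2]]] := hsig s.
  rewrite e in U1.
  have := hd _ _ _ U1 U2.
  have := dist2_ge2 (c1, f c1) (c2, f c2); rewrite /= fc1 fc2.
  have k1 : 1 <= `|r%:R - s%:R : R|.
    case: (ltngtP r s) => hrs; last by move: rs; rewrite (val_inj hrs) eqxx.
      have : r.+1%:R <= s%:R :> R by rewrite ler_nat.
      by rewrite -natr1 => h; rewrite ler_normr; apply/orP; right; lra.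
    have : s.+1%:R <= r%:R :> R by rewrite ler_nat.
    by rewrite -natr1 => h; rewrite ler_normr; apply/orP; left; lra.
  have -> : v r - v s = (r%:R - s%:R) * (D / a%:R).
    by rewrite /v; field; rewrite gt_eqF.
  rewrite normrM.
  have hD : d < `|D / a%:R|.
    rewrite normrM normfV (ger0_norm (ltW a0)) ltr_pdivlMr //.
    by rewrite /D distrC mulrC.
  move: k1 hD; set X := `|D / a%:R|; set K := `|_ - _|; move=> k1 hD h1 h2.
  have : X <= K * X by rewrite -[X in X <= _]mul1r ler_wpM2r //; apply: ltW; apply: le_lt_trans hD; apply: le_trans h2; exact: le_trans (normr_ge0 _) (dist2_ge1 _ _).
  lra.
have sub : (sg @: [set: 'I_a.+1]%SET) \subset colA f U w j.
  apply/fintype.subsetP => _ /imsetP [r _ ->]; rewrite inE; apply/asboolP.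
  have [c [/andP[c1 c2] [fc Uc]]] := hsig r.
  exists c; split => //; split; apply/andP; split; lra.
have := subset_leq_card sub; rewrite card_imset // cardsT card_ord.
by rewrite ltnn.
Qed.


Lemma colA_sum (f : R -> R) n (U : 'I_n -> set (R * R)) (w : R) (m : nat) :
  0 < w -> (forall i p q, U i p -> U i q -> dist2 p q <= 2 * w) ->
  (\sum_(j < m) #|colA f U w j| <= 7 * n)%N.
Proof.
move=> w0 hd.
have -> : (\sum_(j < m) #|colA f U w j| =
    \sum_(i < n) #|[pred j : 'I_m | i \in colA f U w j]|)%N.
  transitivity (\sum_(j < m) \sum_(i < n) (i \in colA f U w j : nat))%N.
    apply: eq_bigr => j _; rewrite -sum1_card big_mkcond /=.
    by apply: eq_bigr => i _; case: (i \in _).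
  rewrite exchange_big /=; apply: eq_bigr => i _.
  rewrite -sum1_card [RHS]big_mkcond /=.
  by apply: eq_bigr => j _; rewrite !inE; case: (i \in colA f U w j).
apply: (@leq_trans (\sum_(i < n) 7)%N); last first.
  by rewrite sum_nat_const card_ord mulnC.
apply: leq_sum => i _.
case: (pickP [pred j : 'I_m | i \in colA f U w j]) => [j0 hj0|]; last first.
  by move=> h; rewrite (eq_card0 h).
have sub : [pred j : 'I_m | i \in colA f U w j] \subset
    ((fun t : 'I_7 => insubd j0 (j0 + t - 3)%N) @: [set: 'I_7]%SET).
  apply/fintype.subsetP => j hj.
move: hj0 hj; rewrite /= !inE => -[x0 [hx0 U0]] [x [hx U1]].
have dx := le_trans (dist2_ge1 _ _) (hd _ _ _ U0 U1).
case: hx0 => _ /andP[a1 a2]; case: hx => _ /andP[b1 b2].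
move: dx; rewrite ler_norml /= => /andP[d1 d2].
move: a2 b2; rewrite !natS_mul => a2 b2.
have h1 : (j <= j0 + 3)%N.
  have : j%:R * w <= (j0 + 3)%:R * w by rewrite natrD mulrDl; lra.
  by rewrite ler_pM2r // ler_nat.
have h2 : (j0 <= j + 3)%N.
  have : j0%:R * w <= (j + 3)%:R * w by rewrite natrD mulrDl; lra.
  by rewrite ler_pM2r // ler_nat.
have ht : (j + 3 - j0 < 7)%N by lia.
apply/imsetP; exists (Ordinal ht) => //.
  by rewrite inE.
apply: val_inj; rewrite val_insubd /=.
have -> : (j0 + (j + 3 - j0) - 3 = j)%N by lia.
by rewrite ltn_ord.
apply: leq_trans (subset_leq_card sub) _.
by rewrite (leq_trans (leq_imset_card _ _)) // cardsT card_ord.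
Qed.


Definition ctrl (f g h : R -> R) := exists B L : R, 0 <= B /\ 0 <= L /\
  (forall x, 0 <= x <= 1 -> `|h x| <= B) /\
  (forall x y, 0 <= x <= 1 -> 0 <= y <= 1 ->
     `|h x - h y| <= L * (`|f x - f y| + `|g x - g y|)).

Lemma cont_bnd (f : R -> R) : {within `[(0:R), 1]%classic, continuous f} ->
  exists B, 0 <= B /\ forall x, 0 <= x <= 1 -> `|f x| <= B.
Proof.
move=> hf.
have [c1 c1in h1] := EVT_max (@ler01 R) hf.
have [c2 c2in h2] := EVT_min (@ler01 R) hf.
exists (`|f c1| + `|f c2|); split; first by rewrite addr_ge0.
move=> x hx; have xin : x \in `[(0:R), 1] by rewrite in_itv.
have := h1 _ xin; have := h2 _ xin => a b.
have n1 : f c1 <= `|f c1| by apply: ler_norm.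
have n2 : - `|f c2| <= f c2 by rewrite lerNl -normrN ler_norm.
have := normr_ge0 (f c1); have := normr_ge0 (f c2) => *.
rewrite ler_norml; apply/andP; split; lra.
Qed.

Lemma ctrl_cst f g (c : R) : ctrl f g (fun _ => c).
Proof.
exists `|c|, 0; split => //; split => //; split => // x y _ _.
by rewrite subrr normr0 mul0r.
Qed.

Lemma ctrl_f f g : {within `[(0:R), 1]%classic, continuous f} -> ctrl f g f.
Proof.
move=> hf; have [B [B0 hB]] := cont_bnd hf.
exists B, 1; split => //; split => //; split => // x y _ _.
by rewrite mul1r lerDl normr_ge0.
Qed.

Lemma ctrl_g f g : {within `[(0:R), 1]%classic, continuous g} -> ctrl f g g.
Proof.
move=> hg; have [B [B0 hB]] := cont_bnd hg.
exists B, 1; split => //; split => //; split => // x y _ _.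
by rewrite mul1r lerDr normr_ge0.
Qed.

Lemma ctrl_add f g h1 h2 : ctrl f g h1 -> ctrl f g h2 ->
  ctrl f g (fun x => h1 x + h2 x).
Proof.
move=> [B1 [L1 [B10 [L10 [hB1 hL1]]]]] [B2 [L2 [B20 [L20 [hB2 hL2]]]]].
exists (B1 + B2), (L1 + L2); split; first by rewrite addr_ge0.
split; first by rewrite addr_ge0.
split.
  move=> x hx; apply: le_trans (ler_normD _ _) _.
  by rewrite lerD // ?hB1 ?hB2.
move=> x y hx hy.
have -> : h1 x + h2 x - (h1 y + h2 y) = (h1 x - h1 y) + (h2 x - h2 y) by ring.
apply: le_trans (ler_normD _ _) _; rewrite mulrDl.
by rewrite lerD // ?hL1 ?hL2.
Qed.

Lemma ctrl_mul f g h1 h2 : ctrl f g h1 -> ctrl f g h2 ->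
  ctrl f g (fun x => h1 x * h2 x).
Proof.
move=> [B1 [L1 [B10 [L10 [hB1 hL1]]]]] [B2 [L2 [B20 [L20 [hB2 hL2]]]]].
exists (B1 * B2), (B1 * L2 + B2 * L1); split; first by rewrite mulr_ge0.
split; first by rewrite addr_ge0 // mulr_ge0.
split.
  by move=> x hx; rewrite normrM ler_pM // ?hB1 ?hB2.
move=> x y hx hy.
have -> : h1 x * h2 x - h1 y * h2 y =
  h1 x * (h2 x - h2 y) + (h1 x - h1 y) * h2 y by ring.
apply: le_trans (ler_normD _ _) _; rewrite !normrM.
set s := `|f x - f y| + `|g x - g y|.
have e1 := ler_pM (normr_ge0 _) (normr_ge0 _) (hB1 x hx) (hL2 x y hx hy).
have e2 := ler_pM (normr_ge0 _) (normr_ge0 _) (hL1 x y hx hy) (hB2 y hy).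
apply: le_trans (lerD e1 e2) _; rewrite -/s.
by rewrite mulrDl !mulrA [L1 * s * B2]mulrC mulrA [B2 * L1]mulrC.
Qed.

Lemma ctrl_exp f g h k : ctrl f g h -> ctrl f g (fun x => h x ^+ k).
Proof.
move=> hh; elim: k => [|k IH].
  have -> : (fun x => h x ^+ 0) = (fun _ => 1) by apply: funext => x; rewrite expr0.
  exact: ctrl_cst.
have -> : (fun x => h x ^+ k.+1) = (fun x => h x * h x ^+ k).
  by apply: funext => x; rewrite exprS.
exact: ctrl_mul.
Qed.


Lemma ctrl_sum f g (I : Type) (r : seq I) (F : I -> R -> R) :
  (forall i, ctrl f g (F i)) -> ctrl f g (fun x => \sum_(i <- r) F i x).
Proof.
move=> hF; elim: r => [|i r IH].
  have -> : (fun x => \sum_(i <- [::]) F i x) = (fun _ => 0).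
    by apply: funext => x; rewrite big_nil.
  exact: ctrl_cst.
have -> : (fun x => \sum_(j <- i :: r) F j x) =
  (fun x => F i x + \sum_(j <- r) F j x).
  by apply: funext => x; rewrite big_cons.
exact: ctrl_add.
Qed.

Lemma ctrl_poly f g n (a : 'I_n -> 'I_n -> R) :
  {within `[(0:R), 1]%classic, continuous f} ->
  {within `[(0:R), 1]%classic, continuous g} ->
  ctrl f g (fun x => poly2 a (f x) (g x)).
Proof.
move=> hf hg; rewrite /poly2.
apply: ctrl_sum => i; apply: ctrl_sum => j.
apply: ctrl_mul; last exact: ctrl_exp (ctrl_g f hg).
apply: ctrl_mul; first exact: ctrl_cst.
exact: ctrl_exp (ctrl_f g hf).
Qed.


Lemma main_cover (f g h : R -> R) (L d : R) n1 n2 :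
  {within `[(0:R), 1]%classic, continuous f} ->
  {within `[(0:R), 1]%classic, continuous g} ->
  0 < d -> 0 <= L ->
  (forall x y, 0 <= x <= 1 -> 0 <= y <= 1 ->
     `|h x - h y| <= L * (`|f x - f y| + `|g x - g y|)) ->
  covers (graph f) d n1 -> covers (graph g) d n2 ->
  exists N, covers (graph h) d N /\
    (N <= (Num.truncn (4 * L)).+1 * (7 * n1 + 7 * n2))%N.
Proof.
move=> hf hg d0 L0 hL [U [hdU hcU]] [V [hdV hcV]].
set K := (Num.truncn (4 * L)).+1.
have hK : 4 * L < K%:R by apply: truncnS_gt.
pose w := d / 2.
have w0 : 0 < w by rewrite divr_gt0.
have dw : d = 2 * w by rewrite /w; field.
pose m := (Num.truncn (1 / w)).+1.
have hm : 1 < m%:R * w by rewrite -ltr_pdivrMr //; exact: truncnS_gt.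
pose a (j : nat) := #|colA f U w j|.
pose b (j : nat) := #|colA g V w j|.
pose Rj (j : 'I_m) := (K * (a j + b j))%N.
pose base (j : 'I_m) := h (j%:R * w) - L * (a j + b j)%:R * d.
have cov : covers (graph h) d (\sum_(j < m) Rj j)%N.
  apply: (grid_cover (h:=h) (Rj:=Rj) (base:=base) w0 _ (ltW d0) hm).
    by rewrite dw; nra.
  move=> j x hx hjx.
  have hin : inC w j x by split.
  have jw1 : j%:R * w <= 1.
    have h1 : (j <= Num.truncn (1 / w))%N by rewrite -ltnS.
    have h2 : (Num.truncn (1 / w))%:R <= 1 / w.
      by rewrite truncn_le divr_ge0 // ltW.
    rewrite -ler_pdivlMr //; apply: le_trans h2; by rewrite ler_nat.
  have jw0 : 0 <= j%:R * w by rewrite mulr_ge0 // ltW.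
  have hjw : inC w j (j%:R * w).
    split; apply/andP; split => //; rewrite natS_mul; lra.
  have of' := col_osc hf hdU hcU hin hjw.
  have og := col_osc hg hdV hcV hin hjw.
  have hl := hL x (j%:R * w) hx (introT andP (conj jw0 jw1)).
  have a1 := colA_ge1 hcU hin.
  rewrite /base /Rj natrM natrD.
  have S1 : 1 <= (a j)%:R + (b j)%:R :> R.
    by apply: le_trans (_ : (a j)%:R <= _); rewrite ?ler1n // lerDl ler0n.
  move: of' og hl; rewrite -/(a j) -/(b j).
  set S := (a j)%:R + (b j)%:R; set A := (a j)%:R; set B := (b j)%:R => of' og hl.
  have hS : A + B = S by [].
  have e1 : `|h x - h (j%:R * w)| <= L * S * d.
    apply: le_trans hl _; rewrite -mulrA ler_wpM2l // -hS mulrDl.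
    exact: lerD.
  have key : 4 * L * (S * w) < K%:R * (S * w).
    by rewrite ltr_pM2r // mulr_gt0 //; lra.
  move: e1; rewrite ler_norml dw => /andP[e1 e2].
  apply/andP; split; nra.
exists (\sum_(j < m) Rj j)%N; split => //.
rewrite /Rj -big_distrr big_split /= leq_mul //.
apply: leq_add.
  apply: colA_sum => // i p q P Q; rewrite -dw; exact: hdU P Q.
apply: colA_sum => // i p q P Q; rewrite -dw; exact: hdV P Q.
Qed.


Lemma cover_exists (f : R -> R) (d : R) :
  {within `[(0:R), 1]%classic, continuous f} -> 0 < d ->
  exists n, covers (graph f) d n.
Proof.
move=> hf d0; have [B [B0 hB]] := cont_bnd hf.
pose w := d / 2.
have w0 : 0 < w by rewrite divr_gt0.
have dw : d = 2 * w by rewrite /w; field.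
pose m := (Num.truncn (1 / w)).+1.
have hm : 1 < m%:R * w by rewrite -ltr_pdivrMr //; exact: truncnS_gt.
pose q := (Num.truncn ((2 * B + 2) / w)).+1.
have hq : 2 * B + 2 < q%:R * w by rewrite -ltr_pdivrMr //; exact: truncnS_gt.
exists (\sum_(j < m) q)%N.
apply: (grid_cover (h:=f) (Rj:=fun _ => q) (base:=fun _ => - B - 1) w0 _ (ltW d0) hm).
  by rewrite dw; nra.
move=> j x hx _; have := hB x hx; rewrite ler_norml => /andP[a b].
apply/andP; split; lra.
Qed.

Lemma Nd_main (f g h : R -> R) (L d : R) :
  {within `[(0:R), 1]%classic, continuous f} ->
  {within `[(0:R), 1]%classic, continuous g} ->
  0 < d -> 0 <= L ->
  (forall x y, 0 <= x <= 1 -> 0 <= y <= 1 ->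
     `|h x - h y| <= L * (`|f x - f y| + `|g x - g y|)) ->
  Ndelta (graph h) d <=
    ((Num.truncn (4 * L)).+1 * 7)%:R *
      (Ndelta (graph f) d + Ndelta (graph g) d).
Proof.
move=> hf hg d0 L0 hL.
set C := ((Num.truncn (4 * L)).+1 * 7)%:R.
have C0 : 0 < C :> R by rewrite ltr0n muln_gt0.
rewrite mulrC -ler_pdivrMr // -lerBlDr.
apply: Nd_lb; first exact: cover_exists.
move=> n1 c1; rewrite lerBlDr addrC -lerBlDr.
apply: Nd_lb; first exact: cover_exists.
move=> n2 c2; rewrite lerBlDr ler_pdivrMr //.
have [N [cN hN]] := main_cover hf hg d0 L0 hL c1 c2.
apply: le_trans (Nd_le cN) _.
rewrite /C -natrD -natrM ler_nat.
apply: leq_trans hN _; lia.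
Qed.


Lemma ratio_main (f g h : R -> R) (L d : R) :
  {within `[(0:R), 1]%classic, continuous f} ->
  {within `[(0:R), 1]%classic, continuous g} ->
  0 <= L ->
  (forall x y, 0 <= x <= 1 -> 0 <= y <= 1 ->
     `|h x - h y| <= L * (`|f x - f y| + `|g x - g y|)) ->
  0 < d -> d < 1 ->
  ln (Ndelta (graph h) d) / (- ln d) <=
    ln ((2 * ((Num.truncn (4 * L)).+1 * 7))%:R) / (- ln d) +
    Num.max (ln (Ndelta (graph f) d) / (- ln d))
            (ln (Ndelta (graph g) d) / (- ln d)).
Proof.
move=> hf hg L0 hL d0 d1.
have P : forall x : R, 0 < x -> x \is Num.pos by move=> x; rewrite posrE.
have hex : forall k : R -> R, {within `[(0:R), 1]%classic, continuous k} ->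
    1 <= Ndelta (graph k) d.
  move=> k hk; apply: (Nd_ge1 (p := (0, k 0))); last exact: cover_exists.
  by exists 0; split => //; rewrite lexx ler01.
have hh : 1 <= Ndelta (graph h) d.
  apply: (Nd_ge1 (p := (0, h 0))); last first.
    have [n1 c1] := cover_exists hf d0; have [n2 c2] := cover_exists hg d0.
    by have [N [cN _]] := main_cover hf hg d0 L0 hL c1 c2; exists N.
  by exists 0; split => //; rewrite lexx ler01.
have Nf1 := hex f hf; have Ng1 := hex g hg.
have X0 : 0 < - ln d by rewrite oppr_gt0 ln_lt0 // d0 d1.
pose C : R := ((Num.truncn (4 * L)).+1 * 7)%:R.
set C' := (2 * ((Num.truncn (4 * L)).+1 * 7))%:R.
have C0 : 1 <= C :> R by rewrite ler1n muln_gt0.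
have eC : C' = 2 * C :> R by rewrite /C' natrM.
have hN := Nd_main hf hg d0 L0 hL; rewrite -/C in hN.
have key : forall Nm, 1 <= Nm -> Ndelta (graph h) d <= C' * Nm ->
    ln (Ndelta (graph h) d) / (- ln d) <= ln C' / (- ln d) + ln Nm / (- ln d).
  move=> Nm Nm1 hNm.
  have Xi : 0 <= (- ln d)^-1 by rewrite invr_ge0 ltW.
  rewrite -mulrDl ler_wpM2r //.
  rewrite -lnM ?P ?eC //; try lra.
  by rewrite ler_ln ?P //; lra.
case: (lerP (Ndelta (graph f) d) (Ndelta (graph g) d)) => hfg.
  apply: le_trans (key _ Ng1 _) _; first by rewrite eC; nra.
  by rewrite lerD2l le_max lexx orbT.
apply: le_trans (key _ Nf1 _) _; first by rewrite eC; nra.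
by rewrite lerD2l le_max lexx.
Qed.


Lemma Nd_ge1_cont (k : R -> R) d : {within `[(0:R), 1]%classic, continuous k} ->
  0 < d -> 1 <= Ndelta (graph k) d.
Proof.
move=> hk d0; apply: (Nd_ge1 (p := (0, k 0))); last exact: cover_exists.
by exists 0; split => //; rewrite lexx ler01.
Qed.

Lemma ubox_ge0 (k : R -> R) : {within `[(0:R), 1]%classic, continuous k} ->
  (0 <= ubox_dim (graph k))%E.
Proof.
move=> hk; apply/ereal_infP => _ [eps eps0 <-].
pose d := Num.min eps 1 / 2.
have m0 : 0 < Num.min eps 1 by rewrite lt_min eps0 ltr01.
have d0 : 0 < d by rewrite divr_gt0.
have dm : d < Num.min eps 1 by rewrite /d ltr_pdivrMr // ltr_pMr // ltr1n.
move: dm; rewrite lt_min => /andP[de d1].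
apply: le_trans (ereal_sup_ubound _) => /=; last first.
  by exists d => //; rewrite /= d0 de.
rewrite lee_fin divr_ge0 ?ln_ge0 ?Nd_ge1_cont //.
by rewrite oppr_ge0 ltW // ln_lt0 // d0 d1.
Qed.

End Aux.

Unset Implicit Arguments. Set Strict Implicit.

Theorem theorem3p7 (R : realType) (f g : R -> R)
  (hf : {within `[(0:R), 1]%classic, continuous f})
  (hg : {within `[(0:R), 1]%classic, continuous g})
  (n : nat) (a : 'I_n -> 'I_n -> R) :
  (ubox_dim (graph (fun x => poly2 a (f x) (g x)))
     <= maxe (ubox_dim (graph f)) (ubox_dim (graph g)))%E.
Proof.
have [B [L [B0 [L0 [_ hL]]]]] := ctrl_poly a hf hg.
set h := (fun x => poly2 a (f x) (g x)).
pose C' : R := (2 * ((Num.truncn (4 * L)).+1 * 7))%:R.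
have C1 : 1 <= C' by rewrite /C' ler1n muln_gt0.
have lC : 0 <= ln C' by rewrite ln_ge0.
have uf0 := ubox_ge0 hf.
move Me : (maxe (ubox_dim (graph f)) (ubox_dim (graph g))) => M.
have ufM : (ubox_dim (graph f) <= M)%E by rewrite -Me le_max lexx.
have ugM : (ubox_dim (graph g) <= M)%E by rewrite -Me le_max lexx orbT.
case: M Me ufM ugM => [r| |] Me ufM ugM; last first.
- by have := le_trans uf0 ufM.
- by rewrite leey.
apply/lee_addgt0Pr => e e0.
have e20 : 0 < e / 2 by rewrite divr_gt0.
have lt1 : (ubox_dim (graph f) < (r + e / 2)%:E)%E.
  by apply: le_lt_trans ufM _; rewrite lte_fin ltrDl.
have lt2 : (ubox_dim (graph g) < (r + e / 2)%:E)%E.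
  by apply: le_lt_trans ugM _; rewrite lte_fin ltrDl.
have [_ [eps1 eps10 <-] h1] := ereal_inf_lt lt1.
have [_ [eps2 eps20 <-] h2] := ereal_inf_lt lt2.
pose eps3 := expR (- (2 * ln C') / e).
pose eps := Num.min (Num.min eps1 eps2) (Num.min eps3 1).
have eps0 : 0 < eps.
  by rewrite !lt_min eps10 eps20 expR_gt0 ltr01.
apply: (@le_trans _ _ (ereal_sup [set (ln (Ndelta (graph h) d) / (- ln d))%:E
                                 | d in [set d : R | 0 < d < eps]])).
  by apply: ereal_inf_lbound; exists eps.
apply: ge_ereal_sup => _ [d /andP[d0 deps] <-].
move: deps; rewrite !lt_min => /andP[/andP[d1 d2] /andP[d3 d4]].
rewrite lee_fin.
have rf : ln (Ndelta (graph f) d) / (- ln d) < r + e / 2.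
  rewrite -lte_fin; apply: le_lt_trans h1.
  by apply: ereal_sup_ubound; exists d => //; rewrite /= d0 d1.
have rg : ln (Ndelta (graph g) d) / (- ln d) < r + e / 2.
  rewrite -lte_fin; apply: le_lt_trans h2.
  by apply: ereal_sup_ubound; exists d => //; rewrite /= d0 d2.
have := ratio_main hf hg L0 hL d0 d4; rewrite -/C'.
have hm : Num.max (ln (Ndelta (graph f) d) / (- ln d))
    (ln (Ndelta (graph g) d) / (- ln d)) <= r + e / 2.
  by rewrite ge_max (ltW rf) (ltW rg).
have X0 : 0 < - ln d by rewrite oppr_gt0 ln_lt0 // d0 d4.
have hC : ln C' / (- ln d) <= e / 2.
  rewrite ler_pdivrMr //.
  have : ln d < ln eps3 by rewrite ltr_ln // posrE ?expR_gt0.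
  rewrite expRK ltr_pdivlMr // => hl.
  nra.
move: hm hC; set A := ln C' / _; set Mx := Num.max _ _ => hm hC hr.
lra.
Qed.
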